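(* For $m\ge3$, no single contraction of the Lie algebra $\mathfrak{po}(m)$ yields a Lie algebra isomorphic to $\mathfrak{po}((1),\dots,(1))$ ($m$ copies of $(1)$).
   Context: $\mathfrak{po}(m)$ is the Lie algebra of the image $\mathrm{PO}(m)$ of $\mathrm{O}(m)$ in $\mathrm{PGL}_m\mathbb{R}$ (isomorphic to $\mathfrak{so}(m)$). $\mathfrak{po}((1),\dots,(1))$ is the Lie algebra of the image in $\mathrm{PGL}_m\mathbb{R}$ of the group of lower-triangular real matrices with diagonal entries $\pm1$; it is isomorphic to the Lie algebra of strictly lower-triangular real $m\times m$ matrices. Contraction: for a Lie algebra $\mathfrak{h}$, a Lie subalgebra $\mathfrak{t}$ with complementary subspace $\mathfrak{t}^c$ and $\phi_\varepsilon(X)=X_{\mathfrak{t}}+\varepsilon X_{\mathfrak{t}^c}$ ($\varepsilon>0$), the contraction along $\mathfrak{t}$ is the vector space of $\mathfrak{h}$ with bracket $[X,Y]'=\lim_{\varepsilon\to0}\phi_\varepsilon^{-1}([\phi_\varepsilon(X),\phi_\varepsilon(Y)])$. *)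

(* Defs.v *)
From HB Require Import structures.
From mathcomp Require Import all_boot all_order all_algebra.
From mathcomp Require Import all_classical all_reals all_analysis.
Unset Printing Implicit Defensive.
Import Order.TTheory GRing.Theory Num.Theory.
Import numFieldNormedType.Exports.
Local Open Scope classical_set_scope.
Local Open Scope ring_scope.

Definition lie {R : realType} {m : nat} (A B : 'M[R]_m) : 'M[R]_m :=
  A *m B - B *m A.

(* so(m): real skew-symmetric matrices (Lie algebra of O(m), isomorphic to po(m)) *)
Definition so_set (R : realType) (m : nat) : set 'M[R]_m :=
  [set A | A^T = - A].

(* strictly lower-triangular matrices (isomorphic to po((1),...,(1))) *)
Definition slt_set (R : realType) (m : nat) : set 'M[R]_m :=
  [set A | forall i j : 'I_m, (val i <= val j)%N -> A i j = 0].

Definition is_subspace {R : realType} {m : nat} (V : set 'M[R]_m) : Prop :=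
  V 0 /\ forall (a : R) (X Y : 'M[R]_m), V X -> V Y -> V (a *: X + Y).

Definition is_lie_subalgebra_so {R : realType} {m : nat} (t : set 'M[R]_m) : Prop :=
  is_subspace t /\ t `<=` so_set R m /\
  forall X Y, t X -> t Y -> t (lie X Y).

Definition is_complement_so {R : realType} {m : nat} (t tc : set 'M[R]_m) : Prop :=
  is_subspace tc /\ tc `<=` so_set R m /\ t `&` tc = [set 0] /\
  forall X, so_set R m X -> exists2 Xt, t Xt & tc (X - Xt).

Definition comp_t {R : realType} {m : nat} (t tc : set 'M[R]_m) (X : 'M[R]_m) : 'M[R]_m :=
  xget 0 [set U | t U /\ tc (X - U)].

Definition phi {R : realType} {m : nat} (t tc : set 'M[R]_m) (e : R) (X : 'M[R]_m) :=
  comp_t t tc X + e *: (X - comp_t t tc X).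

Definition phi_inv {R : realType} {m : nat} (t tc : set 'M[R]_m) (e : R) (X : 'M[R]_m) :=
  comp_t t tc X + e^-1 *: (X - comp_t t tc X).

Definition contr_bracket {R : realType} {m : nat} (t tc : set 'M[R]_m) (X Y : 'M[R]_m)
  : 'M[R]_m :=
  lim ((fun e : R => phi_inv t tc e (lie (phi t tc e X) (phi t tc e Y))) @ 0^'+).

Definition contraction_iso_slt {R : realType} {m : nat} (t tc : set 'M[R]_m)
  (f : 'M[R]_m -> 'M[R]_m) : Prop :=
  [/\ (forall X, so_set R m X -> slt_set R m (f X)),
      (forall (a : R) X Y, so_set R m X -> so_set R m Y -> f (a *: X + Y) = a *: f X + f Y),
      (forall X Y, so_set R m X -> so_set R m Y -> f X = f Y -> X = Y),
      (forall Z, slt_set R m Z -> exists2 X, so_set R m X & f X = Z) &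
      (forall X Y, so_set R m X -> so_set R m Y ->
         f (contr_bracket t tc X Y) = lie (f X) (f Y))].

(* Main.v *)
Require Import Defs.
From HB Require Import structures.
From mathcomp Require Import all_boot all_order all_algebra.
From mathcomp Require Import all_classical all_reals all_analysis.
From mathcomp Require Import ring lra zify.
From Stdlib Require Import Lia.
Import Order.TTheory GRing.Theory Num.Theory.
Import numFieldNormedType.Exports.
Local Open Scope classical_set_scope.
Local Open Scope ring_scope.

Lemma lim_poly (R : realType) (m : nat) (P Q S : 'M[R]_m) (g : R -> 'M[R]_m) :
  (forall e : R, 0 < e -> g e = P + e *: Q + (e * e) *: S) -> lim (g @ 0^'+) = P.
Proof.
move=> hg.
have H : g @ 0^'+ --> P.
  have h1 : (fun e : R => P + e *: Q + (e * e) *: S) @ 0^'+ --> P.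
    apply: cvg_at_right_filter.
    have {2}-> : P = P + (0:R) *: Q + ((0:R) * 0) *: S by rewrite !(mul0r, scale0r, addr0).
    apply: cvgD; first apply: cvgD; first exact: cvg_cst.
      by apply: cvgZr_tmp; exact: cvg_id.
    by apply: cvgZr_tmp; apply: cvgM; exact: cvg_id.
  apply: cvg_trans h1.
  apply: near_eq_cvg. apply: filterS (nbhs_right_gt 0) => e /= he. by rewrite hg.
apply: (cvg_lim _ H). apply: (@norm_hausdorff R (matrix R m m)).
Qed.

Section Sub.
Variables (R : realType) (m : nat).
Implicit Types (V : set 'M[R]_m) (X Y : 'M[R]_m).

Lemma subD V X Y : is_subspace V -> V X -> V Y -> V (X + Y).
Proof. by move=> [_ h] hx hy; have := h 1 X Y hx hy; rewrite scale1r. Qed.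
Lemma subZ V (a : R) X : is_subspace V -> V X -> V (a *: X).
Proof. by move=> [h0 h] hx; have := h a X 0 hx h0; rewrite addr0. Qed.
Lemma subN V X : is_subspace V -> V X -> V (- X).
Proof. by move=> hV hx; have := @subZ V (-1) X hV hx; rewrite scaleN1r. Qed.
Lemma subB V X Y : is_subspace V -> V X -> V Y -> V (X - Y).
Proof. by move=> hV hx hy; apply: subD => //; exact: subN. Qed.

Lemma so_sub : is_subspace (so_set R m).
Proof.
split; first by rewrite /so_set /= trmx0 oppr0.
move=> a X Y; rewrite /so_set /= => hx hy.
by rewrite linearD linearZ /= hx hy scalerN opprD.
Qed.

Lemma so_lie X Y : so_set R m X -> so_set R m Y -> so_set R m (lie X Y).
Proof.
rewrite /so_set /lie /= => hx hy.
by rewrite linearB /= !trmx_mul hx hy !mulmxN !mulNmx !opprK opprB.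
Qed.

Lemma lieDr X Y Z : lie X (Y + Z) = lie X Y + lie X Z.
Proof. by rewrite /lie mulmxDr mulmxDl opprD addrACA. Qed.
Lemma lieDl X Y Z : lie (Y + Z) X = lie Y X + lie Z X.
Proof. by rewrite /lie mulmxDr mulmxDl opprD addrACA. Qed.
Lemma lieZr (a : R) X Y : lie X (a *: Y) = a *: lie X Y.
Proof. by rewrite /lie -scalemxAl -scalemxAr scalerBr. Qed.
Lemma lieZl (a : R) X Y : lie (a *: X) Y = a *: lie X Y.
Proof. by rewrite /lie -scalemxAl -scalemxAr scalerBr. Qed.
Lemma lieBr X Y Z : lie X (Y - Z) = lie X Y - lie X Z.
Proof. by rewrite lieDr -scaleN1r lieZr scaleN1r. Qed.
Lemma lie0r X : lie X 0 = 0.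
Proof. by rewrite /lie mulmx0 mul0mx subrr. Qed.
Lemma lie0l X : lie 0 X = 0.
Proof. by rewrite /lie mulmx0 mul0mx subrr. Qed.

End Sub.
Arguments subD {R m V X Y}.
Arguments subZ {R m V} a {X}.
Arguments subN {R m V X}.
Arguments subB {R m V X Y}.
Arguments so_sub {R m}.
Arguments so_lie {R m X Y}.

Section Comp.
Variables (R : realType) (m : nat) (t tc : set 'M[R]_m).
Implicit Types (X Y : 'M[R]_m).
Local Notation so := (so_set R m).
Local Notation cp := (comp_t t tc).

Lemma cp_uniq X U : is_lie_subalgebra_so t -> is_complement_so t tc ->
  t U -> tc (X - U) -> cp X = U.
Proof.
move=> [st _] [stc [_ [hI _]]] hU hXU.
apply: xget_unique; first by [].
move=> V [hV hXV].
have h1 : (t `&` tc) (V - U).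
  split; first exact: subB.
  have -> : V - U = (X - U) - (X - V) by apply/matrixP => i j; rewrite !mxE; ring.
  exact: subB.
by move: h1; rewrite hI => /= /subr0_eq.
Qed.

Lemma cp_spec X : is_lie_subalgebra_so t -> is_complement_so t tc ->
  so X -> t (cp X) /\ tc (X - cp X).
Proof.
move=> _ [_ [_ [_ hex]]] hX.
apply: (@xgetPex _ 0 [set U | t U /\ tc (X - U)]).
by have [Xt ? ?] := hex X hX; exists Xt.
Qed.

Lemma cp_t X : is_lie_subalgebra_so t -> is_complement_so t tc -> t X -> cp X = X.
Proof.
move=> ht htc hX; apply: cp_uniq => //; rewrite subrr; by case: htc => [[]].
Qed.

Lemma cp_0 : is_lie_subalgebra_so t -> is_complement_so t tc -> cp 0 = 0.
Proof. move=> ht htc; apply: cp_t => //; by case: ht => [[]]. Qed.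

Lemma contr_formula X Y : is_lie_subalgebra_so t -> is_complement_so t tc ->
  so X -> so Y ->
  contr_bracket t tc X Y =
  lie (cp X) (cp Y) + ((lie (cp X) (Y - cp Y) + lie (X - cp X) (cp Y))
     - cp (lie (cp X) (Y - cp Y) + lie (X - cp X) (cp Y))).
Proof.
move=> ht htc hX hY.
have [hXt hXc] := cp_spec _ ht htc hX.
have [hYt hYc] := cp_spec _ ht htc hY.
have [st [tso tlie]] := ht.
have [stc [tcso _]] := htc.
set Xt := cp X; set Yt := cp Y; set Xc := X - Xt; set Yc := Y - Yt.
set A := lie Xt Yt.
set B := lie Xt Yc + lie Xc Yt.
set C := lie Xc Yc.
have hA : t A by exact: tlie.
have hB : so B by apply: (subD so_sub); apply: so_lie; auto.
have hC : so C by apply: so_lie; auto.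
have [hBt hBc] := cp_spec _ ht htc hB.
have [hCt hCc] := cp_spec _ ht htc hC.
apply: (@lim_poly R m _ (cp B + (C - cp C)) (cp C)) => e he.
rewrite /phi_inv /phi -/Xt -/Yt -/Xc -/Yc.
have -> : lie (Xt + e *: Xc) (Yt + e *: Yc) = A + e *: B + (e * e) *: C.
  rewrite lieDl !lieDr !lieZl !lieZr /A /B /C.
  by apply/matrixP => i j; rewrite !mxE; ring.
have -> : cp (A + e *: B + (e * e) *: C) = A + e *: cp B + (e * e) *: cp C.
  apply: cp_uniq => //.
    by apply: (subD st); [apply: (subD st) => //|]; apply: subZ.
  have -> : A + e *: B + (e * e) *: C - (A + e *: cp B + (e * e) *: cp C)
     = e *: (B - cp B) + (e * e) *: (C - cp C).
    by apply/matrixP => i j; rewrite !mxE; ring.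
  by apply: (subD stc); apply: subZ.
have -> : A + e *: B + (e * e) *: C - (A + e *: cp B + (e * e) *: cp C)
     = e *: (B - cp B) + (e * e) *: (C - cp C).
  by apply/matrixP => i j; rewrite !mxE; ring.
have he0 : e != 0 by rewrite gt_eqF.
by apply/matrixP => i j; rewrite !mxE; field.
Qed.

End Comp.
Arguments cp_uniq {R m t tc X U}.
Arguments cp_spec {R m t tc} X.
Arguments cp_t {R m t tc X}.
Arguments cp_0 {R m t tc}.
Arguments contr_formula {R m t tc X Y}.

Section Skew.
Variables (R : realType) (m : nat).
Implicit Types (X Y A B : 'M[R]_m).

Definition ip A B := \tr (A *m B^T).

Lemma ip_skew X A B : X^T = - X -> ip (lie X A) B = - ip A (lie X B).
Proof.
move=> hX; rewrite /ip /lie !linearB /= !trmx_mul hX.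
rewrite mulmxBl (mulmxN B^T X) (mulNmx X B^T) !mulmxN !(raddfN (@mxtrace R m)) opprK.
rewrite (raddfB (@mxtrace R m)) !mulmxA; congr (_ - _).
  by rewrite [RHS]mxtrace_mulC mulmxA.
by rewrite opprK.
Qed.

Lemma ip_self0 A : ip A A = 0 -> A = 0.
Proof.
rewrite /ip /mxtrace => h.
have hsq : forall i j, 0 <= A i j * A i j by move=> i j; rewrite -expr2 sqr_ge0.
have hii : forall i, (A *m A^T) i i = \sum_j (A i j * A i j).
  by move=> i; rewrite mxE; apply: eq_bigr => j _; rewrite mxE.
have h0 : forall i, (A *m A^T) i i = 0.
  move=> i; apply: (psumr_eq0P _ h) => // k _; rewrite hii.
  by apply: sumr_ge0 => j _.
apply/matrixP => i j; rewrite mxE.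
have := h0 i; rewrite hii => /psumr_eq0P H.
have /eqP := H (fun k _ => hsq i k) j isT.
by rewrite mulf_eq0 orbb => /eqP.
Qed.

Lemma lie_sq0 X Z : X^T = - X -> lie X (lie X Z) = 0 -> lie X Z = 0.
Proof.
move=> hX h; apply: ip_self0.
rewrite ip_skew // h /ip trmx0 mulmx0.
by rewrite (raddf0 (@mxtrace R m)) oppr0.
Qed.

Lemma skew_iter X n Y : X^T = - X -> iter n.+1 (lie X) Y = 0 -> lie X Y = 0.
Proof.
move=> hX; elim: n Y => [|n IH] Y //.
rewrite iterSr => /IH h; exact: lie_sq0.
Qed.

End Skew.

Section Depth.
Variables (R : realType) (m : nat).
Implicit Types (X Y Z W A B : 'M[R]_m).

Definition dep (d : nat) A := forall i j : 'I_m, (i < j + d)%N -> A i j = 0.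

Lemma dep_mul a b A B : dep a A -> dep b B -> dep (a + b) (A *m B).
Proof.
move=> hA hB i j hij; rewrite mxE; apply: big1 => k _.
case: (ltnP i (k + a)) => hk; first by rewrite hA // mul0r.
rewrite hB ?mulr0 //; lia.
Qed.

Lemma dep_lie d Z W : dep 1 Z -> dep d W -> dep d.+1 (lie Z W).
Proof.
move=> hZ hW i j hij; rewrite /lie mxE (@dep_mul 1 d Z W hZ hW) ?add0r; last lia.
rewrite mxE (@dep_mul d 1 W Z hW hZ) ?oppr0 //; lia.
Qed.

Lemma dep_iter k Z W : dep 1 Z -> dep 1 W -> dep k.+1 (iter k (lie Z) W).
Proof.
move=> hZ hW; elim: k => [|k IH] //=; exact: dep_lie.
Qed.

Lemma dep_m d W : (m <= d)%N -> dep d W -> W = 0.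
Proof. by move=> hd h; apply/matrixP => i j; rewrite mxE h //; have := ltn_ord i; lia. Qed.

Lemma slt_dep W : slt_set R m W -> dep 1 W.
Proof. by move=> h i j hij; apply: h; rewrite addn1 ltnS in hij. Qed.

Lemma skew_center X : (3 <= m)%N -> X^T = - X ->
  (forall Y, so_set R m Y -> lie X Y = 0) -> X = 0.
Proof.
move=> hm hX hc; apply/matrixP => i a; rewrite mxE.
case: (eqVneq i a) => [<-|hia].
  have := congr1 (fun M : 'M[R]_m => M i i) hX; rewrite !mxE => h; lra.
have [b [hbi hba]] : exists b : 'I_m, b != i /\ b != a.
  have [n [hn hni hna]] : exists n, [/\ (n < 3)%N, n != val i & n != val a].
    have hia' : val i != val a by [].
    case H0: ((0 != val i) && (0 != val a))%N; first by exists 0%N; case/andP: H0.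
    case H1: ((1 != val i) && (1 != val a))%N; first by exists 1%N; case/andP: H1.
    exists 2%N; split => //; apply/negP => /eqP e.
      rewrite -e /= in H0 H1.
      by move: H0 H1; case: (nat_of_ord a) => [|[|k]].
    rewrite -e /= andbT in H0 H1.
    by move: H0 H1; case: (nat_of_ord i) => [|[|k]].
  have hb : (n < m)%N by lia.
  exists (Ordinal hb); split; apply/eqP => /(congr1 val) /= e; subst n.
    by rewrite eqxx in hni.
  by rewrite eqxx in hna.
pose A : 'M[R]_m := delta_mx a b - delta_mx b a.
have hA : so_set R m A.
  by rewrite /so_set /A /= linearB /= !trmx_delta opprB.
have := congr1 (fun M : 'M[R]_m => M i b) (hc A hA).
rewrite /lie !mxE.
have hab : a != b by rewrite eq_sym.
have hib : i != b by rewrite eq_sym.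
have e2 : \sum_j A i j * X j b = 0.
  apply: big1 => j _; rewrite /A !mxE (negbTE hia) (negbTE hib) /=.
  by rewrite subrr mul0r.
rewrite e2 subr0 (bigD1 a) //= big1 ?addr0.
  by rewrite /A !mxE !eqxx (negbTE hab) /= subr0 mulr1.
move=> j hj; rewrite /A !mxE (negbTE hj) (negbTE hba) /=.
by rewrite andbF subrr mulr0.
Qed.

End Depth.
Arguments skew_center {R m X}.

Theorem lemma2p5 (R : realType) (m : nat) : (3 <= m)%N ->
  forall t tc : set 'M[R]_m,
    is_lie_subalgebra_so t -> is_complement_so t tc ->
    ~ exists f : 'M[R]_m -> 'M[R]_m, contraction_iso_slt t tc f.
Proof.
move=> hm t tc ht htc [f [fslt flin finj fsurj fhom]].
have [st [tso tlie]] := ht.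
have [stc [tcso _]] := htc.
have so0 : so_set R m 0 := proj1 so_sub.
have f0 : f 0 = 0.
  by move: (flin (-1) 0 0 so0 so0); rewrite scaler0 addr0 scaleN1r addNr.
have t0 : forall X, t X -> X = 0.
  move=> X hX; have hXso := tso X hX.
  pose D := contr_bracket t tc X.
  have hcX : comp_t t tc X = X := cp_t ht htc hX.
  have hD : forall Y, so_set R m Y -> D Y = lie X (comp_t t tc Y) +
      (lie X (Y - comp_t t tc Y) - comp_t t tc (lie X (Y - comp_t t tc Y))).
    by move=> Y hY; rewrite /D contr_formula // hcX subrr lie0l addr0.
  have hDso : forall Y, so_set R m Y -> so_set R m (D Y).
    move=> Y hY; rewrite hD //; have [h1 h2] := cp_spec _ ht htc hY.
    have hP : so_set R m (lie X (Y - comp_t t tc Y)) by apply: so_lie => //; apply: tcso.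
    have [h3 h4] := cp_spec _ ht htc hP.
    apply: (subD so_sub); [apply: so_lie => //; exact: tso | exact: tcso].
  have hDt : forall Y, so_set R m Y -> t (lie X Y - D Y).
    move=> Y hY; rewrite hD //.
    have hP : so_set R m (lie X (Y - comp_t t tc Y)).
      by apply: so_lie => //; apply: tcso; exact: (cp_spec _ ht htc hY).2.
    have eY : Y = comp_t t tc Y + (Y - comp_t t tc Y) by rewrite addrC subrK.
    rewrite {1}eY lieDr.
    set P := lie X (Y - comp_t t tc Y).
    have -> : lie X (comp_t t tc Y) + P - (lie X (comp_t t tc Y) + (P - comp_t t tc P))
      = comp_t t tc P by apply/matrixP => i j; rewrite !mxE; ring.
    exact: (cp_spec _ ht htc hP).1.
  have hDt' : forall W, t W -> D W = lie X W.
    move=> W hW; rewrite hD; last exact: tso.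
    rewrite (cp_t ht htc hW) subrr lie0r (cp_0 ht htc).
    by rewrite subrr addr0.
  have iterso : forall k Y, so_set R m Y -> so_set R m (iter k D Y).
    by move=> k Y hY; elim: k => [|k IH] //=; apply: hDso.
  have hf : forall k Y, so_set R m Y -> f (iter k D Y) = iter k (lie (f X)) (f Y).
    move=> k Y hY; elim: k => [|k IH] //=.
    by rewrite /D fhom // ?IH //; exact: iterso.
  have hDm : forall Y, so_set R m Y -> iter m D Y = 0.
    move=> Y hY; apply: finj; [exact: iterso | exact: so0 | ].
    rewrite hf // f0.
    apply: (@dep_m R m m.+1) => //.
    apply: dep_iter; apply: slt_dep; exact: fslt.
  have gen : forall k Y, so_set R m Y -> t (iter k (lie X) Y - iter k D Y).
    elim => [|k IH] Y hY /=; first by rewrite subrr; exact: st.1.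
    have -> : lie X (iter k (lie X) Y) - D (iter k D Y) =
        lie X (iter k (lie X) Y - iter k D Y) + (lie X (iter k D Y) - D (iter k D Y)).
      by rewrite lieBr addrA subrK.
    apply: (subD st); [apply: tlie => //; exact: IH | exact: hDt (iterso _ _ hY)].
  have hW : forall Y, so_set R m Y -> t (iter m (lie X) Y).
    by move=> Y hY; have := gen m Y hY; rewrite hDm // subr0.
  have hWD : forall k W, t W -> iter k D W = iter k (lie X) W.
    elim => [|k IH] W hW0 //.
    by rewrite !iterSr hDt' // IH //; exact: tlie.
  have hnil : forall Y, so_set R m Y -> iter (m + m) (lie X) Y = 0.
    move=> Y hY; rewrite iterD -hWD; [exact: hDm (tso _ (hW _ hY)) | exact: hW].
  apply: (skew_center hm hXso) => Y hY.
  apply: (@skew_iter R m X (m + m).-1 Y hXso).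
  have -> : (m + m).-1.+1 = (m + m)%N by lia.
  exact: hnil.
have cp0 : forall X, so_set R m X -> comp_t t tc X = 0.
  by move=> X hX; apply: t0; exact: (cp_spec _ ht htc hX).1.
have contr0 : forall X Y, so_set R m X -> so_set R m Y -> contr_bracket t tc X Y = 0.
  move=> X Y hX hY; rewrite contr_formula // (cp0 X hX) (cp0 Y hY) !lie0l !lie0r.
  by rewrite !addr0 (cp_0 ht htc) subrr addr0.
have h0 : (0 < m)%N by lia.
have h1 : (1 < m)%N by lia.
have h2 : (2 < m)%N by lia.
pose i0 := Ordinal h0; pose i1 := Ordinal h1; pose i2 := Ordinal h2.
have sltd : forall r c : 'I_m, (val c < val r)%N -> slt_set R m (delta_mx r c).
  move=> r c hrc i j hij; rewrite mxE.
  case: (eqVneq i r) => [eir|]; case: (eqVneq j c) => [ejc|] //=.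
  by subst; move: hij hrc; lia.
have [X1 hX1 e1] := fsurj _ (sltd i1 i0 isT).
have [X2 hX2 e2] := fsurj _ (sltd i2 i1 isT).
have := fhom X1 X2 hX1 hX2.
rewrite contr0 // f0 e1 e2 /lie mul_delta_mx mul_delta_mx_0 //.
move=> /(congr1 (fun M : 'M[R]_m => M i2 i0)); rewrite !mxE /=.
by rewrite sub0r => /eqP; rewrite eq_sym oppr_eq0 oner_eq0.
Qed.
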